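(* Fix $\alpha\in[0,1)$, $\beta\in(0,1)$, $Q=1-\alpha$, $S=1-\beta$. For the combined clumsy-careless collector, with $\mu_n^{\alpha,\beta}:=\mathbb P_{\nu_n^{\alpha,\beta}}(K_0<n,K_1=n)$ and $T_n^{\alpha,\beta}$ the first post-thinning completion time, there are constants $C,c\in(0,\infty)$ depending only on $\alpha,\beta$ such that for all sufficiently large $n$, \[\sup_{A\subseteq[n]}\mathbb P_A\left(\mu_n^{\alpha,\beta}T_n^{\alpha,\beta}>x\right)\le Ce^{-cx},\qquad x\ge0,\] where $\mathbb P_A$ denotes the process started from the set $A$ of present types. In particular this holds for the empty initial collection.
   Context: Combined clumsy-careless collector on $n$ types: the state is the set of present types. In each round one type is drawn uniformly from $[n]$ independently; it is refreshed to present with probability $Q$ and to absent with probability $\alpha$; then every currently present coupon is independently retained with probability $S$. Completion is checked after thinning: $T_n^{\alpha,\beta}=\inf\{t\ge0:\text{all } n \text{ types present at time } t\}$. $K_t$ is the number of present types; it is a Markov chain on $\{0,\dots,n\}$ (given $K_t=k$: with probability $k/n$, $K_{t+1}\sim\mathrm{Bin}(k-1,S)+\mathrm{Bernoulli}(QS)$; with probability $(n-k)/n$, $K_{t+1}\sim\mathrm{Bin}(k,S)+\mathrm{Bernoulli}(QS)$), irreducible and aperiodic with unique stationary law $\nu_n^{\alpha,\beta}$. *)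

(* Defs.v *)
From HB Require Import structures.
From mathcomp Require Import all_boot all_order all_algebra.
From mathcomp Require Import all_classical all_reals all_analysis.
Set Implicit Arguments. Unset Strict Implicit. Unset Printing Implicit Defensive.
Import Order.TTheory GRing.Theory Num.Theory.
Local Open Scope ring_scope.

(* Probability that independent S-thinning (S = 1 - beta) of C yields exactly B *)
Definition thin (R : realType) (n : nat) (beta : R) (C B : {set 'I_n}) : R :=
  if B \subset C then (1 - beta) ^+ #|B| * beta ^+ (#|C| - #|B|) else 0.

(* One-round transition probability A -> B: draw i uniformly, refresh to present
   w.p. Q = 1 - alpha, to absent w.p. alpha, then thin all present coupons. *)
Definition ccTrans (R : realType) (n : nat) (alpha beta : R)
    (A B : {set 'I_n}) : R :=
  (n%:R)^-1 * \sum_(i : 'I_n)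
      ((1 - alpha) * thin beta (i |: A) B + alpha * thin beta (A :\ i) B).

(* ccSurv alpha beta t A = P_A(T > t), T = inf {t >= 0 : X_t = [n]}. *)
Fixpoint ccSurv (R : realType) (n : nat) (alpha beta : R) (t : nat)
    (A : {set 'I_n}) : R :=
  if A == [set: 'I_n] then 0 else
  match t with
  | 0 => 1
  | t'.+1 => \sum_(B : {set 'I_n}) ccTrans alpha beta A B * ccSurv alpha beta t' B
  end.

Definition binp (R : realType) (m : nat) (p : R) (j : nat) : R :=
  ('C(m, j))%:R * p ^+ j * (1 - p) ^+ (m - j).

(* law of Bin(m, S) + Bernoulli(Q S) (independent) at j *)
Definition binBern (R : realType) (alpha beta : R) (m j : nat) : R :=
  let S := 1 - beta in let Q := 1 - alpha in
  (1 - Q * S) * binp m S j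
  + Q * S * (if j is j'.+1 then binp m S j' else 0).

Definition Ktrans (R : realType) (n : nat) (alpha beta : R)
    (k j : 'I_n.+1) : R :=
  (k%:R / n%:R) * binBern alpha beta (k.-1) j
  + ((n - k)%:R / n%:R) * binBern alpha beta k j.

Definition Kstationary (R : realType) (n : nat) (alpha beta : R)
    (nu : 'I_n.+1 -> R) : Prop :=
  (forall k, 0 <= nu k) /\ \sum_(k : 'I_n.+1) nu k = 1 /\
  (forall j, \sum_(k : 'I_n.+1) nu k * Ktrans alpha beta k j = nu j).

Definition ccMu (R : realType) (n : nat) (alpha beta : R) (nu : 'I_n.+1 -> R) : R :=
  \sum_(k : 'I_n.+1 | (k < n)%N) nu k * Ktrans alpha beta k ord_max.

(* Main.v *)
Require Import Defs.
From HB Require Import structures.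
From mathcomp Require Import all_boot all_order all_algebra.
From mathcomp Require Import all_classical all_reals all_analysis.
From mathcomp Require Import lra ring.
Import Order.TTheory GRing.Theory Num.Theory.
Local Open Scope ring_scope.
Set Implicit Arguments. Unset Strict Implicit.

Lemma ltn_predS a b : (a < b.-1)%N -> (a.+1 < b)%N.
Proof. by case: b. Qed.

Section Main.
Context (R : realType) (alpha beta : R) (Ha0 : 0 <= alpha) (Ha1 : alpha < 1)
  (Hb0 : 0 < beta) (Hb1 : beta < 1).
Local Notation S := (1 - beta).
Local Notation Q := (1 - alpha).

Lemma thin_ge0 n (C B : {set 'I_n}) : 0 <= thin beta C B.
Proof.
rewrite /thin; case: ifP => _ //.
by rewrite mulr_ge0 // exprn_ge0 // ?subr_ge0 ?ltW.
Qed.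

Lemma thin_sum n (C : {set 'I_n}) : \sum_B thin beta C B = 1.
Proof.
pose F := fun i : 'I_n => if i \in C then 1 - beta else 0.
pose G := fun i : 'I_n => if i \in C then beta else 1.
have H1 : \prod_i (F i + G i) = 1.
  rewrite big1 // => i _; rewrite /F /G; case: ifP => _; last by rewrite add0r.
  by rewrite subrK.
rewrite -H1 bigA_distr; apply: eq_bigr => J _.
rewrite /thin; case: ifP => HJ.
- rewrite (bigID (mem J)) /=.
  rewrite (eq_bigr (fun _ => 1 - beta)); last first.
    by move=> i Hi; rewrite Hi /F (fintype.subsetP HJ).
  rewrite prodr_const; congr (_ * _).
  rewrite (eq_bigr (fun i => if i \in C then beta else 1)); last first.
    by move=> i /negbTE ->.
  rewrite -big_mkcondr /= prodr_const; congr (_ ^+ _).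
  have -> : #|[pred i | (i \notin J) && (i \in C)]| = #|C :\: J|.
    by apply: eq_card => i; rewrite !inE.
  by rewrite cardsD (finset.setIidPr HJ).
- move/negbT: HJ => /fintype.subsetPn [i HiJ HiC].
  rewrite (bigD1 i) //= HiJ /F (negbTE HiC) mul0r //.
Qed.

Lemma ccTrans_ge0 n (A B : {set 'I_n}) : 0 <= ccTrans alpha beta A B.
Proof.
rewrite /ccTrans mulr_ge0 ?invr_ge0 ?ler0n // sumr_ge0 // => i _.
by rewrite addr_ge0 // mulr_ge0 ?thin_ge0 // subr_ge0 ltW.
Qed.

Lemma ccTrans_sum n (A : {set 'I_n}) : (0 < n)%N ->
  \sum_B ccTrans alpha beta A B = 1.
Proof.
move=> n0; rewrite /ccTrans -mulr_sumr exchange_big /=.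
rewrite (eq_bigr (fun _ => 1)); last first.
  move=> i _; rewrite big_split /= -!mulr_sumr !thin_sum !mulr1.
  by rewrite subrK.
by rewrite sumr_const card_ord mulVf // pnatr_eq0 -lt0n.
Qed.

Lemma ccTrans_up n (A : {set 'I_n}) i : i \notin A ->
  (n%:R)^-1 * ((1 - alpha) * (1 - beta) ^+ (#|A|.+1))
    <= ccTrans alpha beta A (i |: A).
Proof.
move=> HiA; rewrite /ccTrans ler_wpM2l ?invr_ge0 ?ler0n //.
rewrite (bigD1 i) //= -addrA.
have -> : thin beta (i |: A) (i |: A) = (1 - beta) ^+ #|A|.+1.
  by rewrite /thin subxx cardsU1 HiA subnn expr0 mulr1.
rewrite lerDl addr_ge0 ?sumr_ge0 // => [|j _];
  rewrite ?addr_ge0 ?mulr_ge0 ?thin_ge0 // subr_ge0 ltW //.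
Qed.

Lemma ccSurv_full n t : ccSurv alpha beta t [set: 'I_n] = 0.
Proof. by case: t => [|t] /=; rewrite eqxx. Qed.

Lemma ccSurv_ge0 n t (A : {set 'I_n}) : 0 <= ccSurv alpha beta t A.
Proof.
elim: t A => [|t IH] A /=; case: ifP => // _.
by rewrite sumr_ge0 // => B _; rewrite mulr_ge0 ?ccTrans_ge0.
Qed.

Lemma ccSurv_le1 n t (A : {set 'I_n}) : (0 < n)%N -> ccSurv alpha beta t A <= 1.
Proof.
move=> n0; elim: t A => [|t IH] A /=; case: ifP => // _.
rewrite -(ccTrans_sum A n0) ler_sum // => B _.
by rewrite ler_piMr ?ccTrans_ge0.
Qed.

Lemma ccSurvS n t (A : {set 'I_n}) : ccSurv alpha beta t.+1 A =
  if A == [set: 'I_n] then 0 else \sum_B ccTrans alpha beta A B * ccSurv alpha beta t B.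
Proof. by []. Qed.

Lemma ccSurv_mono n t (A : {set 'I_n}) : (0 < n)%N ->
  ccSurv alpha beta t.+1 A <= ccSurv alpha beta t A.
Proof.
move=> n0; elim: t A => [|t IH] A.
  by have := ccSurv_le1 1 A n0; rewrite /=; case: ifP.
rewrite !ccSurvS; case: ifP => // _.
by apply: ler_sum => B _; rewrite ler_wpM2l ?ccTrans_ge0.
Qed.

Lemma ccSurv_monoN n s t (A : {set 'I_n}) : (0 < n)%N -> (s <= t)%N ->
  ccSurv alpha beta t A <= ccSurv alpha beta s A.
Proof.
move=> n0 /subnK <-; elim: (t - s)%N => [|d IH] //.
by rewrite addSn (le_trans (ccSurv_mono _ _ n0)).
Qed.

Lemma ccSurv_semi n m (a : R) : 
  (forall B : {set 'I_n}, ccSurv alpha beta m B <= a) ->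
  forall s (A : {set 'I_n}), ccSurv alpha beta (s + m) A <= a * ccSurv alpha beta s A.
Proof.
move=> Hm; elim=> [|s IH] A.
  rewrite add0n; have := Hm A; rewrite /=; case: ifP => HA; last by rewrite mulr1.
  by rewrite (eqP HA) ccSurv_full mulr0.
rewrite addSn /=; case: ifP => _; first by rewrite mulr0.
rewrite mulr_sumr ler_sum // => B _.
by rewrite mulrCA ler_wpM2l ?ccTrans_ge0.
Qed.

Lemma ccSurv_pow n m (a : R) : 
  (forall B : {set 'I_n}, ccSurv alpha beta m B <= a) ->
  forall k (A : {set 'I_n}), ccSurv alpha beta (k * m) A <= a ^+ k.
Proof.
move=> Hm; elim=> [|k IH] A.
  rewrite mul0n expr0 /=; case: ifP => //.
rewrite mulSn addnC (le_trans (ccSurv_semi Hm _ _)) // exprS.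
have a0 : 0 <= a by apply: le_trans (Hm A); apply: ccSurv_ge0.
by rewrite ler_wpM2l.
Qed.

Definition pk n k : R := (n - k)%:R / n%:R * ((1 - alpha) * (1 - beta) ^+ k.+1).
Definition Gk n k : R := \prod_(i < k) (1 + (pk n i)^-1).

Lemma pk_gt0 n k : (k < n)%N -> 0 < pk n k.
Proof.
move=> kn; rewrite /pk !mulr_gt0 ?invr_gt0 ?ltr0n ?subn_gt0 ?exprn_gt0 //;
  by [apply: leq_ltn_trans kn | rewrite subr_gt0].
Qed.

Lemma Gk_ge1 n k : (k <= n)%N -> 1 <= Gk n k.
Proof.
move=> kn; rewrite /Gk; elim: k kn => [|k IH] kn; first by rewrite big_ord0.
rewrite big_ord_recr /= (le_trans (IH (ltnW kn))) // ler_peMr //.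
  by apply: le_trans (IH (ltnW kn)).
by rewrite lerDl invr_ge0 ltW // pk_gt0.
Qed.

Lemma Gk_mono n k l : (k <= l)%N -> (l <= n)%N -> Gk n k <= Gk n l.
Proof.
move=> /subnK <-; elim: (l - k)%N => [|d IH] // Hn.
rewrite addSn /Gk big_ord_recr /= (le_trans (IH (ltnW Hn))) // ler_peMr //.
  by apply: le_trans (Gk_ge1 (ltnW Hn)).
by rewrite lerDl invr_ge0 ltW // pk_gt0.
Qed.

Lemma GkS n k : (k < n)%N -> Gk n k.+1 = Gk n k * (1 + (pk n k)^-1).
Proof. by move=> _; rewrite /Gk big_ord_recr. Qed.

Lemma card_lt_full n (A : {set 'I_n}) : A != [set: 'I_n] -> (#|A| < n)%N.
Proof.
move=> HA; have : A \proper [set: 'I_n] by rewrite properT.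
by move/proper_card; rewrite cardsT card_ord.
Qed.

Lemma drift n (A : {set 'I_n}) : A != [set: 'I_n] ->
  1 + Gk n #|A| <= \sum_B ccTrans alpha beta A B * Gk n #|B|.
Proof.
move=> HA; have kn := card_lt_full HA; have n0 : (0 < n)%N by apply: leq_ltn_trans kn.
set k := #|A|.
have -> : \sum_B ccTrans alpha beta A B * Gk n #|B| =
   1 + \sum_B ccTrans alpha beta A B * (Gk n #|B| - 1).
  rewrite -{1}(ccTrans_sum A n0) -big_split /=; apply: eq_bigr => B _.
  by rewrite mulrBr mulr1 addrC subrK.
rewrite lerD2l.
pose S := [set i |: A | i in ~: A].
have inj : {in ~: A &, injective (fun i => i |: A)}.
  move=> i j; rewrite !inE => Hi Hj Hij.
  have : i \in j |: A by rewrite -Hij setU11.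
  by rewrite in_setU1 (negbTE Hi) orbF => /eqP.
rewrite (bigID (mem S)) /= -[X in X <= _]addr0 lerD //; last first.
  apply: sumr_ge0 => B _; rewrite mulr_ge0 ?ccTrans_ge0 // subr_ge0 Gk_ge1 //.
  by rewrite -[X in (_ <= X)%N](card_ord n) max_card.
rewrite (big_imset _ inj) /=.
have cS : forall i, i \in ~: A -> #|i |: A| = k.+1.
  by move=> i; rewrite inE => Hi; rewrite cardsU1 Hi.
rewrite (eq_bigr (fun i => ccTrans alpha beta A (i |: A) * (Gk n k.+1 - 1))); last first.
  by move=> i Hi; rewrite cS.
have G1 := Gk_ge1 (ltnW kn).
have pk0 := pk_gt0 kn.
apply: (@le_trans _ _ (\sum_(i in ~: A) (n%:R)^-1 * ((1 - alpha) * (1 - beta) ^+ k.+1) * (Gk n k.+1 - 1))); last first.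
  apply: ler_sum => i; rewrite inE => Hi; rewrite ler_wpM2r ?ccTrans_up //.
  by rewrite subr_ge0 Gk_ge1.
rewrite sumr_const.
have -> : #|~: A| = (n - k)%N by rewrite cardsCs finset.setCK card_ord.
have -> : (n%:R)^-1 * ((1 - alpha) * (1 - beta) ^+ k.+1) * (Gk n k.+1 - 1) *+ (n - k)
   = pk n k * (Gk n k.+1 - 1) by rewrite -mulr_natl /pk; ring.
rewrite GkS // (_ : _ * _ = pk n k * (Gk n k - 1) + Gk n k); last first.
  by field; rewrite gt_eqF.
by rewrite lerDr mulr_ge0 ?subr_ge0 // ltW.
Qed.

Lemma exp_time n t (A : {set 'I_n}) : (0 < n)%N ->
  \sum_(s < t) ccSurv alpha beta s A <= Gk n n - Gk n #|A|.
Proof.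
move=> n0; elim: t A => [|t IH] A.
  by rewrite big_ord0 subr_ge0 Gk_mono // -[X in (_ <= X)%N](card_ord n) max_card.
case: (boolP (A == [set: 'I_n])) => HA.
  rewrite (eqP HA) big1 ?cardsT ?card_ord ?subrr // => s _; exact: ccSurv_full.
rewrite big_ord_recl /= (negbTE HA).
rewrite (eq_bigr (fun s : 'I_t => \sum_B ccTrans alpha beta A B * ccSurv alpha beta s B)); last first.
  by move=> s _; rewrite add0n.
rewrite exchange_big /=.
under eq_bigr do rewrite -mulr_sumr.
apply: (@le_trans _ _ (1 + \sum_B ccTrans alpha beta A B * (Gk n n - Gk n #|B|))).
  by rewrite lerD2l ler_sum // => B _; rewrite ler_wpM2l ?ccTrans_ge0.
under eq_bigr do rewrite mulrBr.
rewrite sumrB -mulr_suml ccTrans_sum // mul1r.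
have := drift HA; lra.
Qed.


Lemma S0 : 0 <= S. Proof. by rewrite subr_ge0 ltW. Qed.
Lemma S1 : S <= 1. Proof. by rewrite lerBlDr lerDl ltW. Qed.
Lemma Q0 : 0 <= Q. Proof. by rewrite subr_ge0 ltW. Qed.
Lemma Q1 : Q <= 1. Proof. by rewrite lerBlDr lerDl. Qed.

Lemma binp_ge0 m j : 0 <= binp m S j.
Proof. by rewrite /binp !mulr_ge0 ?exprn_ge0 ?S0 // subr_ge0 S1. Qed.

Lemma binp_small m j : (m < j)%N -> binp m S j = 0.
Proof. by move=> H; rewrite /binp bin_small // mulr0n !mul0r. Qed.

Lemma binp_nn m : binp m S m = S ^+ m.
Proof. by rewrite /binp binn subnn expr0 mulr1 mul1r. Qed.

Lemma binp_sum m : \sum_(j < m.+1) binp m S j = 1.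
Proof.
have E := exprDn (1 - S) S m; rewrite subrK expr1n in E.
rewrite [RHS]E; apply: eq_bigr => i _; rewrite /binp -mulr_natl; ring.
Qed.

Lemma sum_trunc (f : nat -> R) N M : (forall j, 0 <= f j) ->
  (forall j, (M <= j)%N -> f j = 0) ->
  \sum_(j < N) f j <= \sum_(j < M) f j.
Proof.
move=> f0 fM.
rewrite -!(big_mkord xpredT f).
apply: (@le_trans _ _ (\sum_(0 <= j < N + M) f j)).
  rewrite (@big_cat_nat _ _ _ N 0 (N + M) _ _ (leq0n N) (leq_addr M N)) /= lerDl sumr_ge0 //.
have H0 : \sum_(M <= j < N + M) f j = 0.
  by apply: big1_seq => j /andP [_]; rewrite mem_index_iota => /andP [Hj _]; exact: fM.
by rewrite (@big_cat_nat _ _ _ M 0 (N + M) _ _ (leq0n M) (leq_addl N M)) /= H0 addr0.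
Qed.

Lemma binp_sum_le m N : \sum_(j < N) binp m S j <= 1.
Proof.
rewrite -[X in _ <= X](binp_sum m); apply: sum_trunc => j; first exact: binp_ge0.
by move=> Hj; apply: binp_small.
Qed.

Lemma binBernE m j : binBern alpha beta m j =
  (1 - Q * S) * binp m S j + Q * S * (if j is j'.+1 then binp m S j' else 0).
Proof. by []. Qed.

Lemma QS1 : 0 <= 1 - Q * S.
Proof. by rewrite subr_ge0 mulr_ile1 ?Q0 ?S0 ?Q1 ?S1. Qed.

Lemma binBern_ge0 m j : 0 <= binBern alpha beta m j.
Proof.
rewrite binBernE; apply: addr_ge0; apply: mulr_ge0; rewrite ?QS1 ?binp_ge0 //.
  by apply: mulr_ge0; [apply: Q0 | apply: S0].
by case: j => // j; rewrite binp_ge0.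
Qed.

Lemma binBern_zero m j : (m.+1 < j)%N -> binBern alpha beta m j = 0.
Proof.
move=> H; rewrite binBernE binp_small ?mulr0 ?add0r; last by apply: ltn_trans H.
by case: j H => // j H; rewrite binp_small ?mulr0.
Qed.

Lemma binBern_sum m N : \sum_(j < N) binBern alpha beta m j <= 1.
Proof.
case: N => [|N]; first by rewrite big_ord0.
rewrite (eq_bigr (fun j : 'I_N.+1 => (1 - Q * S) * binp m S j +
   Q * S * (if (j : nat) is j'.+1 then binp m S j' else 0))) //.
rewrite big_split /= -!mulr_sumr [X in _ + _ * X]big_ord_recl /= add0r.
rewrite (eq_bigr (fun j : 'I_N => binp m S j)); last first.
  by move=> i _; rewrite add0n.
apply: (@le_trans _ _ ((1 - Q * S) * 1 + Q * S * 1)); last by rewrite !mulr1 subrK.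
by rewrite lerD // ler_wpM2l ?QS1 ?binp_sum_le // mulr_ge0 ?Q0 ?S0.
Qed.

Definition KT n (k j : nat) : R :=
  (k%:R / n%:R) * binBern alpha beta (k.-1) j
  + ((n - k)%:R / n%:R) * binBern alpha beta k j.

Lemma KtransE n (k j : 'I_n.+1) : Ktrans alpha beta k j = KT n k j.
Proof. by []. Qed.

Lemma KT_ge0 n k j : 0 <= KT n k j.
Proof. by rewrite /KT addr_ge0 // mulr_ge0 ?divr_ge0 ?binBern_ge0. Qed.

Lemma KT_zero n k j : (k.+1 < j)%N -> KT n k j = 0.
Proof.
move=> H; rewrite /KT !binBern_zero ?mulr0 ?addr0 //.
by apply: leq_ltn_trans H; case: k.
Qed.

Lemma KT_sum n k : (0 < n)%N -> (k <= n)%N -> \sum_(j < n.+1) KT n k j <= 1.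
Proof.
move=> n0 kn; rewrite /KT big_split /= -!mulr_sumr.
apply: (@le_trans _ _ (k%:R / n%:R * 1 + (n - k)%:R / n%:R * 1)).
  by rewrite lerD // ler_wpM2l ?divr_ge0 ?binBern_sum.
rewrite !mulr1 -mulrDl -natrD subnKC // divff // pnatr_eq0 -lt0n //.
Qed.


Lemma KT_up n k : KT n k k.+1 = (n - k)%:R / n%:R * (Q * S ^+ k.+1).
Proof.
have h2 : binBern alpha beta k k.+1 = Q * S * S ^+ k.
  by rewrite binBernE /= binp_small // binp_nn mulr0 add0r.
rewrite /KT h2 exprS mulrA.
case: k h2 => [|k] h2; first by rewrite mulr0n !mul0r add0r.
by rewrite binBern_zero // mulr0 add0r.
Qed.

Lemma bernoulli m (x : R) : 0 <= x -> 1 + m%:R * x <= (1 + x) ^+ m.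
Proof.
move=> x0; elim: m => [|m IH]; first by rewrite mul0r addr0 expr0.
rewrite exprSr -natr1.
have h : 0 <= m%:R * x * x by rewrite !mulr_ge0.
apply: (@le_trans _ _ ((1 + m%:R * x) * (1 + x))); last first.
  by rewrite ler_wpM2r // addr_ge0.
rewrite mulrDl mulrDr; lra.
Qed.

Lemma KT_diag n i : (0 < n)%N -> (i < n)%N ->
  KT n i.+1 i.+1 + KT n i.+1 i.+2 <= (1 - beta ^+ 2) ^+ i.+1.
Proof.
move=> n0 Hi.
set a : R := i.+1%:R / n%:R.
set b : R := (n - i.+1)%:R / n%:R.
set X := S ^+ i.+1.
set c : R := i.+1%:R.
have ab : a + b = 1.
  by rewrite /a /b -mulrDl -natrD subnKC // divff // pnatr_eq0 -lt0n.
have a0 : 0 <= a by rewrite divr_ge0.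
have b0 : 0 <= b by rewrite divr_ge0.
have X0 : 0 <= X by rewrite exprn_ge0 // S0.
have c0 : 0 <= c by [].
have E1 : KT n i.+1 i.+1 = a * (Q * X) + b * (X * (1 + Q * c * beta) - Q * S * X).
  rewrite /KT /= binBernE binBernE binp_small // binp_nn binp_nn.
  rewrite /binp binSn subSn // subnn expr1 /X exprS -/a -/b -/c; ring.
have E2 : KT n i.+1 i.+2 = b * (Q * S * X).
  by rewrite KT_up -/b /X [S ^+ i.+2]exprS; congr (_ * _); ring.
rewrite E1 E2 -addrA -mulrDr subrK.
apply: (@le_trans _ _ (a * (X * (1 + c * beta)) + b * (X * (1 + c * beta)))).
  apply: lerD; apply: ler_wpM2l => //.
    have q1 := Q1; have q0 := Q0; have h : 0 <= X * (c * beta) by rewrite !mulr_ge0 // ltW.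
    nra.
  have q1 := Q1; have h : 0 <= X * c * beta by rewrite !mulr_ge0 // ltW.
  nra.
rewrite -mulrDl ab mul1r.
have -> : 1 - beta ^+ 2 = S * (1 + beta) by ring.
rewrite exprMn ler_wpM2l // bernoulli // ltW //.
Qed.



Lemma KT_upE n k : KT n k k.+1 = pk n k.
Proof. by rewrite KT_up. Qed.

Lemma sum_pick n m (F : nat -> R) : (m <= n)%N ->
  \sum_(j < n.+1) (if (j : nat) == m then F j else 0) = F m.
Proof.
move=> mn; rewrite -big_mkcond /= (big_pred1 (inord m)).
  by rewrite inordK.
move=> j /=; apply/eqP/eqP => [<-|->]; first by rewrite inord_val.
by rewrite inordK.
Qed.

Lemma term_le_sum n m (F : nat -> R) : (m <= n)%N -> (forall j, 0 <= F j) ->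
  F m <= \sum_(j < n.+1) F j.
Proof.
move=> mn F0; rewrite -(@sum_pick _ _ F mn) ler_sum // => j _.
by case: ifP.
Qed.

Definition gam : R := 1 - beta ^+ 2.

Lemma gam_ge0 : 0 <= gam.
Proof. rewrite /gam subr_ge0 expr_le1 ?ltW //. Qed.

Lemma gam_lt1 : gam < 1.
Proof. by rewrite /gam ltrBlDr ltrDl exprn_gt0. Qed.

Lemma d_gt0 i : 0 < 1 - gam ^+ i.+1.
Proof. by rewrite subr_gt0 exprn_ilt1 ?gam_ge0 ?gam_lt1. Qed.

Lemma prod_exp m (x : nat -> R) : (forall i, 0 <= x i) ->
  \prod_(i < m) (1 + x i) <= expR (\sum_(i < m) x i).
Proof.
move=> x0; rewrite expR_sum; apply: ler_prod => i _.
by rewrite expR_ge1Dx andbT addr_ge0.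
Qed.

Lemma geo m (y : R) : 0 <= y -> y < 1 -> \sum_(i < m) y ^+ i.+1 <= (1 - y)^-1.
Proof.
move=> y0 y1.
have tel : \sum_(i < m) y ^+ i * (1 - y) = 1 - y ^+ m.
  elim: m => [|m IH]; first by rewrite big_ord0 expr0 subrr.
  by rewrite big_ord_recr /= IH exprSr; ring.
have h : \sum_(i < m) y ^+ i <= (1 - y)^-1.
  rewrite -[X in _ <= X]div1r ler_pdivlMr ?subr_gt0 // mulr_suml tel lerBlDr lerDl exprn_ge0 //.
by apply: le_trans h; apply: ler_sum => i _; rewrite exprS ler_piMl ?exprn_ge0 // ltW.
Qed.

Lemma pk_le n i : (0 < n)%N -> pk n i <= S ^+ i.+1.
Proof.
move=> n0; rewrite /pk mulrA -[X in _ <= X]mul1r ler_wpM2r ?exprn_ge0 ?S0 //.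
rewrite -[X in _ <= X]mulr1 ler_pM ?Q1 ?Q0 ?divr_ge0 //.
by rewrite ler_pdivrMr ?ltr0n // mul1r ler_nat leq_subr.
Qed.

Lemma dinv_le i : (1 - gam ^+ i.+1)^-1 <= 1 + gam ^+ i.+1 / beta ^+ 2.
Proof.
have g0 : 0 <= gam ^+ i.+1 by rewrite exprn_ge0 // gam_ge0.
have g1 : gam ^+ i.+1 <= gam.
  by rewrite exprS ler_piMr ?gam_ge0 // exprn_ile1 ?gam_ge0 // ltW // gam_lt1.
have b2 : 0 < beta ^+ 2 by rewrite exprn_gt0.
have gb : gam = 1 - beta ^+ 2 by [].
rewrite -[X in X <= _]div1r ler_pdivrMr ?d_gt0 //.
set g := gam ^+ i.+1 in g0 g1 *.
have -> : (1 + g / beta ^+ 2) * (1 - g) = 1 + g * (1 - g - beta ^+ 2) / beta ^+ 2.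
  by field; rewrite gt_eqF.
rewrite lerDl; apply: divr_ge0; last exact: ltW.
apply: mulr_ge0 => //; lra.
Qed.

Section Stationary.
Variable n : nat.
Hypothesis n0 : (0 < n)%N.
Variable nu0 : 'I_n.+1 -> R.
Hypothesis Hst : Kstationary alpha beta nu0.
Let nu (k : nat) : R := nu0 (inord k).

Lemma nu_ge0 k : 0 <= nu k.
Proof. by case: Hst => H _; apply: H. Qed.

Lemma nu_sum : \sum_(k < n.+1) nu k = 1.
Proof.
case: Hst => _ [H _]; rewrite -H; apply: eq_bigr => k _.
by rewrite /nu inord_val.
Qed.

Lemma nu_stat j : (j <= n)%N -> nu j = \sum_(k < n.+1) nu k * KT n k j.
Proof.
move=> jn; case: Hst => _ [_ H]; rewrite /nu -H; apply: eq_bigr => k _.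
by rewrite inord_val KtransE inordK.
Qed.

Lemma nu_le1 k : (k <= n)%N -> nu k <= 1.
Proof. by move=> kn; rewrite -[X in _ <= X]nu_sum; apply: (@term_le_sum _ _ nu kn) => j; apply: nu_ge0. Qed.


Lemma cut i : (i.+1 < n)%N -> nu i.+1 * (1 - gam ^+ i.+1) <= nu i * pk n i.
Proof.
move=> Hi.
set d := 1 - gam ^+ i.+1.
pose c k : R := (if k == i then pk n i else 0) + (if (i < k)%N then 1 else 0)
   - (if k == i.+1 then d else 0).
have key : forall k, (k <= n)%N ->
    \sum_(j < n.+1 | (i < j)%N) KT n k j <= c k.
  move=> k kn; rewrite /c.
  case: (ltngtP k i) => Hki.
  - rewrite big1 ?(gtn_eqF Hki) ?(ltn_eqF (ltn_trans Hki (ltnSn i))) ?subr0 ?addr0.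
      by [].
    by move=> j Hj; apply: KT_zero; apply: leq_ltn_trans Hj.
  - rewrite add0r.
    case: (ltngtP k i.+1) => Hk2; first by rewrite ltnS leqNgt Hki in Hk2.
    + rewrite ?(gtn_eqF Hk2) subr0; apply: le_trans (KT_sum n0 kn).
      rewrite big_mkcond /= ler_sum // => j _; case: ifP => // _; exact: KT_ge0.
    + rewrite Hk2 ?eqxx.
      have -> : 1 - d = gam ^+ i.+1 by rewrite /d; ring.
      apply: le_trans (KT_diag n0 (ltnW Hi)).
      rewrite -(@sum_pick n i.+1 (KT n i.+1)) ?(ltnW Hi) //.
      rewrite -(@sum_pick n i.+2 (KT n i.+1)) // -big_split big_mkcond /=.
      apply: ler_sum => j _.
      case: (ltngtP j i.+1) => Hj.
      * by rewrite (ltn_eqF (ltn_trans Hj (ltnSn _))) addr0.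
      * rewrite add0r; case: eqP => [_|Hne] //; rewrite KT_zero //.
        by rewrite ltn_neqAle Hj andbT; apply/eqP => H; apply: Hne; rewrite H.
      * by rewrite Hj (ltn_eqF (ltnSn _)) addr0.
  - rewrite Hki ?eqxx ?ltnn ?(ltn_eqF (ltnSn i)) ?subr0 ?addr0.
    rewrite -KT_upE -(@sum_pick n i.+1 (KT n i)) ?(ltnW Hi) // big_mkcond /=.
    apply: ler_sum => j _.
    case: (ltngtP j i.+1) => Hj //.
    by rewrite KT_zero.
have e1 : \sum_(j < n.+1 | (i < j)%N) nu j =
    \sum_(k < n.+1) nu k * \sum_(j < n.+1 | (i < j)%N) KT n k j.
  rewrite (eq_bigr (fun j : 'I_n.+1 => \sum_(k < n.+1) nu k * KT n k j)); last first.
    by move=> l _; apply: nu_stat; rewrite -ltnS.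
  by rewrite exchange_big /=; apply: eq_bigr => k _; rewrite mulr_sumr.
have e2 : \sum_(k < n.+1) nu k * c k =
    nu i * pk n i + \sum_(j < n.+1 | (i < j)%N) nu j - nu i.+1 * d.
  rewrite /c; under eq_bigr do rewrite mulrBr mulrDr.
  rewrite sumrB big_split /=.
  have -> : \sum_(k < n.+1) nu k * (if (k : nat) == i then pk n i else 0) = nu i * pk n i.
    rewrite -(@sum_pick n i (fun k => nu k * pk n i)) ?(ltnW (ltnW Hi)) //.
    by apply: eq_bigr => k _; case: ifP; rewrite ?mulr0.
  have -> : \sum_(k < n.+1) nu k * (if (k : nat) == i.+1 then d else 0) = nu i.+1 * d.
    rewrite -(@sum_pick n i.+1 (fun k => nu k * d)) ?(ltnW Hi) //.
    by apply: eq_bigr => k _; case: ifP; rewrite ?mulr0.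
  congr (_ + _ - _); rewrite [RHS]big_mkcond; apply: eq_bigr => k _.
  by case: ifP; rewrite ?mulr1 ?mulr0.
have : \sum_(j < n.+1 | (i < j)%N) nu j <= \sum_(k < n.+1) nu k * c k.
  rewrite e1; apply: ler_sum => k _; rewrite ler_wpM2l ?nu_ge0 // key //.
  by rewrite -ltnS.
rewrite e2; lra.
Qed.

Lemma nu_bound k : (k < n)%N ->
  nu k <= \prod_(i < k) (pk n i / (1 - gam ^+ i.+1)).
Proof.
elim: k => [|k IH] Hk; first by rewrite big_ord0 nu_le1 // ltnW.
rewrite big_ord_recr /=.
have h := cut Hk; have dk := d_gt0 k.
have pk0 : 0 < pk n k by apply: pk_gt0; apply: ltn_trans Hk.
apply: (@le_trans _ _ (nu k * pk n k / (1 - gam ^+ k.+1))).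
  by rewrite ler_pdivlMr.
rewrite -mulrA ler_wpM2r //; last exact: IH (ltnW Hk).
by rewrite divr_ge0 // ltW.
Qed.

Lemma mu_eq : ccMu alpha beta nu0 = nu n.-1 * pk n n.-1.
Proof.
rewrite /ccMu.
have -> : \sum_(k < n.+1 | (k < n)%N) nu0 k * Ktrans alpha beta k ord_max =
  \sum_(k < n.+1) (if (k : nat) == n.-1 then nu k * KT n k n else 0).
  rewrite big_mkcond; apply: eq_bigr => k _.
  rewrite KtransE /nu inord_val /=.
  case: eqP => [->|Hne]; first by rewrite ltn_predL n0.
  case: ifP => // kn; rewrite KT_zero ?mulr0 //.
  have H : (k < n.-1)%N by rewrite ltn_neqAle -ltnS prednK // kn andbT; apply/eqP.
  by apply: ltn_predS.
rewrite (@sum_pick n n.-1 (fun k => nu k * KT n k n)) ?leq_pred //.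
by have := KT_upE n n.-1; rewrite prednK // => ->.
Qed.

Lemma nu_pos : 0 < nu n.-1.
Proof.
rewrite lt_def nu_ge0 andbT; apply/negP => /eqP H0.
have down : forall m, (m < n)%N -> nu (n.-1 - m) = 0.
  elim=> [|m IH] Hm; first by rewrite subn0.
  have Hk : ((n.-1 - m.+1).+1 = n.-1 - m)%N.
    by rewrite subnS prednK // subn_gt0 -ltnS prednK.
  have st := nu_stat (leq_trans (leq_subr m n.-1) (leq_pred n)).
  have : nu (n.-1 - m.+1) * KT n (n.-1 - m.+1) (n.-1 - m) <= nu (n.-1 - m).
    rewrite [X in _ <= X]st; apply: (@term_le_sum n (n.-1 - m.+1) (fun k => nu k * KT n k (n.-1 - m))).
      by apply: leq_trans (leq_subr _ _) (leq_pred n).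
    by move=> j; rewrite mulr_ge0 ?nu_ge0 ?KT_ge0.
  rewrite IH ?(ltnW Hm) // -{1}Hk KT_upE.
  have pk0 : 0 < pk n (n.-1 - m.+1).
    by apply: pk_gt0; apply: leq_ltn_trans (leq_subr _ _) _; rewrite prednK.
  move=> H; apply/eqP; rewrite eq_le nu_ge0 andbT.
  by move: H; rewrite (pmulr_lle0 _ pk0).
have all0 : forall k, (k < n)%N -> nu k = 0.
  move=> k kn; have kn' : (k <= n.-1)%N by rewrite -ltnS prednK.
  have := down (n.-1 - k)%N; rewrite subKn //; apply.
  by apply: leq_ltn_trans (leq_subr _ _) _; rewrite ltn_predL.
have Hn : nu n = nu n * KT n n n.
  rewrite [LHS](nu_stat (leqnn n)) (bigD1 ord_max) //= big1 ?addr0 // => k Hk.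
  rewrite all0 ?mul0r //.
  have := ltn_ord k; rewrite ltnS leq_eqVlt => /orP [/eqP E|//].
  by move: Hk; rewrite -(inj_eq val_inj) /= E eqxx.
have Kn : KT n n n < 1.
  have Hlt : (n.-1 < n)%N by rewrite ltn_predL.
  have := KT_diag n0 Hlt; rewrite prednK // => h.
  have g1 : gam ^+ n < 1 by rewrite exprn_ilt1 ?gam_ge0 ?gam_lt1 // -lt0n.
  have := KT_ge0 n n n.+1; lra.
have nn0 : nu n = 0.
  have h0 := nu_ge0 n.
  have : nu n * (1 - KT n n n) = 0 by rewrite mulrBr mulr1 -Hn subrr.
  move/eqP; rewrite mulf_eq0 subr_eq0 => /orP [/eqP //|/eqP H1].
  by move: Kn; rewrite H1 ltxx.
have := nu_sum; rewrite big1 => [|k _]; first by move/eqP; rewrite eq_sym oner_eq0.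
have := ltn_ord k; rewrite ltnS leq_eqVlt => /orP [/eqP ->|]; first exact: nn0.
exact: all0.
Qed.

Lemma muG : ccMu alpha beta nu0 * Gk n n <= expR (beta^-1) * expR ((beta ^+ 4)^-1).
Proof.
have Hlt : (n.-1 < n)%N by rewrite ltn_predL.
set n' := n.-1 in Hlt *.
have E : Gk n n = Gk n n' * (1 + (pk n n')^-1) by rewrite -GkS ?prednK.
have pkn : 0 < pk n n' by apply: pk_gt0.
have pk0 : forall i, (i < n')%N -> 0 < pk n i.
  by move=> i Hi; apply: pk_gt0; apply: ltn_trans Hlt.
have G0 : 0 <= Gk n n' by apply: le_trans (Gk_ge1 (ltnW Hlt)).
pose P' := \prod_(i < n') (pk n i / (1 - gam ^+ i.+1)).
have h1 : ccMu alpha beta nu0 * Gk n n <= P' * Gk n n' * (pk n n' + 1).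
  rewrite mu_eq E.
  have -> : P' * Gk n n' * (pk n n' + 1) = P' * pk n n' * (Gk n n' * (1 + (pk n n')^-1)).
    by field; rewrite gt_eqF.
  rewrite -[X in X <= _]mulrA -[X in _ <= X]mulrA ler_wpM2r //.
    apply: mulr_ge0; first exact: ltW.
    by apply: mulr_ge0 => //; rewrite addr_ge0 // invr_ge0 ltW.
  exact: nu_bound Hlt.
have h2 : P' * Gk n n' <= \prod_(i < n') (1 + pk n i) * \prod_(i < n') (1 + gam ^+ i.+1 / beta ^+ 2).
  rewrite /P' /Gk -!big_split /=; apply: ler_prod => i _.
  have p0 := pk0 i (ltn_ord i); have dd := d_gt0 i.
  have -> : pk n i / (1 - gam ^+ i.+1) * (1 + (pk n i)^-1) = (1 + pk n i) * (1 - gam ^+ i.+1)^-1.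
    by field; rewrite !gt_eqF.
  apply/andP; split.
    apply: mulr_ge0; [apply: addr_ge0 => //; exact: ltW | rewrite invr_ge0; exact: ltW].
  rewrite ler_wpM2l ?dinv_le //; apply: addr_ge0 => //; exact: ltW.
have h3 : \prod_(i < n') (1 + pk n i) * (pk n n' + 1) <= expR (beta^-1).
  rewrite addrC -(big_ord_recr n' (fun i => 1 + pk n i)) /=.
  rewrite prednK //; apply: le_trans (prod_exp _ _) _.
    move=> i; rewrite /pk; apply: mulr_ge0; first by rewrite divr_ge0.
    by apply: mulr_ge0; [exact: Q0 | apply: exprn_ge0; exact: S0].
  rewrite ler_expR.
  apply: (@le_trans _ _ (\sum_(i < n) (1 - beta) ^+ i.+1)).
    by apply: ler_sum => i _; apply: pk_le.
  have S1' : 1 - beta < 1 by rewrite ltrBlDr ltrDl.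
  apply: le_trans (geo _ S0 S1') _.
  by have -> : 1 - (1 - beta) = beta by ring.
have h4 : \prod_(i < n') (1 + gam ^+ i.+1 / beta ^+ 2) <= expR ((beta ^+ 4)^-1).
  apply: le_trans (@prod_exp n' (fun i => gam ^+ i.+1 / beta ^+ 2) _) _.
    by move=> i; rewrite divr_ge0 ?exprn_ge0 ?gam_ge0 // ltW.
  rewrite ler_expR -mulr_suml.
  have b2 : 0 < beta ^+ 2 by rewrite exprn_gt0.
  apply: (@le_trans _ _ ((1 - gam)^-1 / beta ^+ 2)).
    by rewrite ler_wpM2r ?invr_ge0 ?(ltW b2) // geo ?gam_ge0 ?gam_lt1.
  have -> : 1 - gam = beta ^+ 2 by rewrite /gam; ring.
  by rewrite -invfM -exprD.
have G1 : 0 <= \prod_(i < n') (1 + pk n i).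
  apply: prodr_ge0 => i _; apply: addr_ge0 => //; exact: ltW (pk0 _ (ltn_ord i)).
have G2 : 0 <= \prod_(i < n') (1 + gam ^+ i.+1 / beta ^+ 2).
  apply: prodr_ge0 => i _; apply: addr_ge0 => //; rewrite divr_ge0 ?exprn_ge0 ?gam_ge0 //.
  exact: ltW.
apply: le_trans h1 _.
have pp : 0 <= pk n n' + 1 by apply: addr_ge0 => //; exact: ltW.
apply: (@le_trans _ _ (\prod_(i < n') (1 + pk n i) * \prod_(i < n') (1 + gam ^+ i.+1 / beta ^+ 2) * (pk n n' + 1))).
  by rewrite ler_wpM2r.
rewrite mulrAC; apply: ler_pM => //; first by rewrite mulr_ge0.
Qed.

Lemma mu_pos : 0 < ccMu alpha beta nu0.
Proof.
rewrite mu_eq mulr_gt0 ?nu_pos //; apply: pk_gt0; by rewrite ltn_predL.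
Qed.

Lemma mu_le1 : ccMu alpha beta nu0 <= 1.
Proof.
rewrite mu_eq; apply: mulr_ile1; first exact: nu_ge0.
- apply: ltW; apply: pk_gt0; by rewrite ltn_predL.
- by apply: nu_le1; apply: leq_pred.
- apply: le_trans (pk_le _ n0) _; apply: exprn_ile1; [exact: S0 | exact: S1].
Qed.

End Stationary.

Lemma surv_m n (B : {set 'I_n}) m : (0 < n)%N ->
  m.+1%:R * ccSurv alpha beta m B <= Gk n n.
Proof.
move=> n0.
have h := exp_time m.+1 B n0.
have cB : (#|B| <= n)%N by rewrite -[X in (_ <= X)%N](card_ord n) max_card.
have G0 : 0 <= Gk n #|B| := le_trans ler01 (Gk_ge1 cB).
apply: le_trans (_ : _ <= Gk n n - Gk n #|B|) _; last by rewrite lerBlDr lerDl.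
apply: le_trans h; rewrite mulr_natl -[X in _ *+ X](card_ord m.+1) -sumr_const.
apply: ler_sum => s _; apply: ccSurv_monoN => //; by rewrite -ltnS.
Qed.

End Main.

Unset Implicit Arguments.

Theorem mainTheorem17 (R : realType) (alpha beta : R) :
  0 <= alpha -> alpha < 1 -> 0 < beta -> beta < 1 ->
  exists C c : R, 0 < C /\ 0 < c /\
  exists N : nat, forall n : nat, (N <= n)%N ->
  forall nu : 'I_n.+1 -> R, Kstationary alpha beta nu ->
  forall (A : {set 'I_n}) (x : R), 0 <= x ->
    ccSurv alpha beta (Num.truncn (x / ccMu alpha beta nu)) A
      <= C * expR (- (c * x)).
Proof.
move=> Ha0 Ha1 Hb0 Hb1.
set Kc := expR (beta^-1) * expR ((beta ^+ 4)^-1).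
have Kc0 : 0 < Kc by rewrite mulr_gt0 ?expR_gt0.
set L := Kc * expR 1 + 1.
have L0 : 0 < L by rewrite addr_gt0 ?mulr_gt0 ?expR_gt0.
exists (expR 1), L^-1; split; first exact: expR_gt0.
split; first by rewrite invr_gt0.
exists 1%N => n n0 nu Hst A x x0.
set mu := ccMu alpha beta nu.
have mu0 : 0 < mu := mu_pos Ha0 Ha1 Hb0 Hb1 n0 Hst.
have mu1 : mu <= 1 := mu_le1 Ha0 Ha1 Hb0 Hb1 n0 Hst.
have muG : mu * Gk alpha beta n n <= Kc := muG Ha0 Ha1 Hb0 Hb1 n0 Hst.
set M := Gk alpha beta n n.
have M1 : 1 <= M by apply: Gk_ge1 => //.
set e := expR (1 : R).
have e0 : 0 < e by apply: expR_gt0.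
set m := (Num.truncn (M * e)).+1.
have Mem : M * e <= m%:R.
  by apply: ltW; apply: truncnS_gt.
have mMe : m%:R <= M * e + 1.
  rewrite /m -natr1 lerD2r; have := truncn_itv (_ : 0 <= M * e); case/(_ _)/andP.
    by rewrite mulr_ge0 // ltW // (lt_le_trans ltr01 M1).
  by [].
have Hm : forall B : {set 'I_n}, ccSurv alpha beta m B <= expR (-1).
  move=> B; have h := surv_m Ha0 Ha1 Hb0 Hb1 B m n0.
  rewrite expRN -/e -[X in _ <= X]mul1r ler_pdivlMr //.
  have s0 : 0 <= ccSurv alpha beta m B by apply: ccSurv_ge0.
  move: h; rewrite -natr1; set s := ccSurv alpha beta m B => h.
  set mm : R := m%:R in Mem mMe h *.
  have h2 : s * (M * e) <= s * mm by rewrite ler_wpM2l.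
  have h3 : s * e * M <= M.
    have -> : s * e * M = s * (M * e) by ring.
    rewrite -/M mulrDl mul1r [mm * s]mulrC in h; rewrite -/s in s0; lra.
  by rewrite -(ler_pM2r (lt_le_trans ltr01 M1)) mul1r.
set t := Num.truncn (x / mu).
set k := (t %/ m)%N.
have Hpow : ccSurv alpha beta (k * m) A <= expR (-1) ^+ k by apply: ccSurv_pow.
have Hmono : ccSurv alpha beta t A <= ccSurv alpha beta (k * m) A.
  by apply: ccSurv_monoN => //; exact: leq_divM.
have Ht : (t.+1 <= k.+1 * m)%N by apply: ltn_ceil.
have Hx : x / mu < t.+1%:R by apply: truncnS_gt.
have Hx2 : x / mu < k.+1%:R * m%:R.
  by apply: lt_le_trans Hx _; rewrite -natrM ler_nat.
have mmu : m%:R * mu <= L.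
  apply: (@le_trans _ _ ((M * e + 1) * mu)); first by rewrite ler_wpM2r // ltW.
  rewrite mulrDl mul1r /L; apply: lerD => //.
  rewrite mulrAC ler_wpM2r //; first exact: ltW.
  by rewrite mulrC.
have Hx3 : x <= k.+1%:R * L.
  move: Hx2; rewrite ltr_pdivrMr // => /ltW h; apply: le_trans h _.
  by rewrite -mulrA ler_wpM2l.
apply: le_trans Hmono _; apply: le_trans Hpow _.
rewrite -expRM_natl /e -expRD ler_expR.
rewrite mulrN1 -natr1 in Hx3 *.
have : x / L <= k%:R + 1 by rewrite ler_pdivrMr // mulrC.
rewrite mulrC; lra.
Qed.
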